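(* Let $q$ be a prime power with $4\mid(q-1)$, $n\ge1$, let $\mathscr{C}\subseteq\mathrm{GF}(q^2)^n$ be a scalable code and let $\mathscr{B}$ be a basis of $\mathrm{GF}(q^2)$ over $\mathrm{GF}(q)$. If $\mathrm{Im}_{\mathscr{B}}(\mathscr{C})\subseteq\mathrm{GF}(q)^{2n}$ is self-orthogonal w.r.t. the canonical inner product $\sum_{i=1}^{2n}x_iy_i$, then $\mathscr{C}$ is self-orthogonal w.r.t. the canonical inner product $\sum_{i=1}^n x_iy_i$ on $\mathrm{GF}(q^2)^n$.
   Context: $\mathrm{Tr}:\mathrm{GF}(q^2)\to\mathrm{GF}(q)$, $\mathrm{Tr}(a)=a+a^q$. The dual basis of a basis $\{\gamma_1,\gamma_2\}$ is the unique basis $\{\beta_1,\beta_2\}$ with $\mathrm{Tr}(\gamma_i\beta_j)=\delta_{ij}$. A code $\mathscr{C}\subseteq\mathrm{GF}(q^2)^n$ is scalable if $x\in\mathscr{C}\Rightarrow\alpha x\in\mathscr{C}$ for all $\alpha\in\mathrm{GF}(q^2)$. For a basis $\mathscr{B}$ with dual basis $\{\beta_1,\beta_2\}$, $\mathrm{Im}_{\mathscr{B}}(\mathscr{C})=\{(\mathrm{Tr}(\beta_1x_1),\ldots,\mathrm{Tr}(\beta_1x_n),\mathrm{Tr}(\beta_2x_1),\ldots,\mathrm{Tr}(\beta_2x_n)):x\in\mathscr{C}\}$. A code $D$ is self-orthogonal w.r.t. a form $g$ if $g(x,y)=0$ for all $x,y\in D$. *)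

(* Defs.v *)
From HB Require Import structures.
From mathcomp Require Import all_boot all_order all_algebra all_field.
Set Implicit Arguments. Unset Strict Implicit. Unset Printing Implicit Defensive.
Import GRing.Theory.
Local Open Scope ring_scope.

(* GF(q^2) is the finite field L with #|L| = q^2; GF(q) is realized as its
   unique subfield of order q, namely { a in L | a^q = a }. *)
Definition inGFq (L : finFieldType) (q : nat) (a : L) : bool := a ^+ q == a.

Definition Tr (L : finFieldType) (q : nat) (a : L) : L := a + a ^+ q.

Definition is_basis (L : finFieldType) (q : nat) (g1 g2 : L) : Prop :=
  (forall a b : L, inGFq q a -> inGFq q b -> a * g1 + b * g2 = 0 -> a = 0 /\ b = 0)
  /\ (forall x : L, exists a b : L, [/\ inGFq q a, inGFq q b & x = a * g1 + b * g2]).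

Definition is_dual_basis (L : finFieldType) (q : nat) (g1 g2 b1 b2 : L) : Prop :=
  [/\ Tr q (g1 * b1) = 1, Tr q (g1 * b2) = 0, Tr q (g2 * b1) = 0 & Tr q (g2 * b2) = 1].

Definition scalable_code (L : finFieldType) (n : nat) (C : {set 'rV[L]_n}) : Prop :=
  forall x, x \in C -> forall alpha : L, alpha *: x \in C.

Definition dotp (R : nzRingType) (m : nat) (x y : 'rV[R]_m) : R :=
  \sum_(i < m) x ord0 i * y ord0 i.

Definition self_orthogonal (R : finFieldType) (m : nat) (D : {set 'rV[R]_m}) : Prop :=
  forall x y, x \in D -> y \in D -> dotp x y = 0.

Definition imB_vec (L : finFieldType) (q n : nat) (b1 b2 : L) (x : 'rV[L]_n)
  : 'rV[L]_(n + n) :=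
  row_mx (map_mx (fun a => Tr q (b1 * a)) x) (map_mx (fun a => Tr q (b2 * a)) x).

Definition ImB (L : finFieldType) (q n : nat) (b1 b2 : L) (C : {set 'rV[L]_n})
  : {set 'rV[L]_(n + n)} := [set imB_vec q b1 b2 x | x in C].

(* Main.v *)
Require Import Defs.
From mathcomp Require Import all_boot all_order all_algebra all_field.
From mathcomp Require Import ring.
Local Open Scope ring_scope.
Import GRing.Theory.

Section Aux.
Variables (L : finFieldType) (q : nat).
Hypothesis FD : forall a b : L, (a + b) ^+ q = a ^+ q + b ^+ q.
Hypothesis Fqq : forall a : L, a ^+ q ^+ q = a.
Hypothesis q0 : (0 < q)%N.

Lemma F0 : (0 : L) ^+ q = 0.
Proof. by rewrite expr0n; case: q q0. Qed.

Lemma FN (a : L) : (- a) ^+ q = - a ^+ q.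
Proof.
apply/eqP; rewrite -subr_eq0 opprK -FD addNr F0 //.
Qed.

Lemma TrD (a b : L) : Tr q (a + b) = Tr q a + Tr q b.
Proof. rewrite /Tr FD; ring. Qed.

Lemma Tr0 : Tr q (0 : L) = 0.
Proof. by rewrite /Tr F0 addr0. Qed.

Lemma Tr_sum (I : finType) (f : I -> L) :
  Tr q (\sum_(i : I) f i) = \sum_(i : I) Tr q (f i).
Proof. exact: (big_morph _ TrD Tr0). Qed.

Lemma TrTr (c d : L) : Tr q c * Tr q d = Tr q (c * d) + Tr q (c * d ^+ q).
Proof. rewrite /Tr exprMn exprMn Fqq; ring. Qed.

Lemma Tr_scal (t z : L) : t ^+ q = t -> Tr q (t * z) = t * Tr q z.
Proof. move=> ht; rewrite /Tr exprMn ht; ring. Qed.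
End Aux.
Arguments F0 {L q}.
Arguments FN {L q}.
Arguments TrD {L q}.
Arguments Tr0 {L q}.
Arguments Tr_sum {L q}.
Arguments TrTr {L q}.
Arguments Tr_scal {L q}.

Theorem proposition4 (q : nat) (L : finFieldType) (n : nat)
  (hq : exists p k : nat, prime p /\ q = (p ^ k)%N)
  (hL : #|L| = (q ^ 2)%N)
  (h4 : (4 %| q.-1)%N)
  (hn : (0 < n)%N)
  (C : {set 'rV[L]_n}) (hC : scalable_code C)
  (g1 g2 b1 b2 : L) (hB : is_basis q g1 g2) (hdual : is_dual_basis q g1 g2 b1 b2) :
  self_orthogonal (ImB q b1 b2 C) -> self_orthogonal C.
Proof.
move=> hImB.
have [p [k [pp qE]]] := hq.
have q0 : (0 < q)%N by rewrite qE expn_gt0 prime_gt0.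
have pch : p \in [pchar L].
  apply: (@card_finPcharP _ _ (k * 2)) => //; by rewrite hL qE expnM.
have FD : forall a b : L, (a + b) ^+ q = a ^+ q + b ^+ q.
  move=> a b; apply: exprDn_pchar.
  by rewrite qE pnatX pnatE // pch.
have Fqq : forall a : L, a ^+ q ^+ q = a.
  by move=> a; rewrite -exprM mulnn -hL expf_card.
have [Tg1b1 Tg1b2 Tg2b1 Tg2b2] := hdual.
have TR0 := Tr0 q0.
have nondeg : forall z : L, (forall a, Tr q (a * z) = 0) -> z = 0.
  move=> z h; case: (eqVneq z 0) => // nz; exfalso.
  have := h (g1 * b1 / z); rewrite divfK // Tg1b1 => /eqP; by rewrite oner_eq0.
have b2nz : b2 != 0.
  apply/eqP => b20; move: Tg2b2; rewrite b20 mulr0 TR0 => /eqP; by rewrite eq_sym oner_eq0.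
have [beta hbeta] : exists beta : L, beta ^+ q != beta.
  case: (boolP (g1 ^+ q == g1)) => h1; last by exists g1.
  case: (boolP (g2 ^+ q == g2)) => h2; last by exists g2.
  exfalso.
  have [hg2 _] := (proj1 hB) g2 (GRing.opp g1) h2 ltac:(by rewrite /inGFq (FN FD q0) (eqP h1)) ltac:(ring).
  move: Tg2b2; rewrite hg2 mul0r TR0 => /eqP; by rewrite eq_sym oner_eq0.
have Snz : b1 ^+ 2 + b2 ^+ 2 != 0.
  apply/negP => /eqP hS.
  set t := b1 / b2.
  have t2 : t ^+ 2 = -1.
    rewrite /t expr_div_n (_ : b1 ^+ 2 = - b2 ^+ 2); last by apply/eqP; rewrite -addr_eq0 hS.
    by rewrite mulNr divff // expf_neq0.
  have tq : t ^+ q = t.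
    have [k' hk'] := dvdnP h4.
    rewrite -(prednK q0) hk' exprS mulnC exprM (_ : t ^+ 4 = 1) ?expr1n ?mulr1 //.
    by rewrite (_ : 4%N = (2 * 2)%N) // exprM t2 sqrrN expr1n.
  have hb1 : b1 = t * b2 by rewrite /t divfK.
  move: Tg1b1; rewrite hb1 mulrCA Tr_scal // Tg1b2 mulr0 => /eqP; by rewrite eq_sym oner_eq0.
move=> x y hx hy.
set P := (b1 ^+ 2 + b2 ^+ 2) * dotp x y.
set Q := (b1 * b1 ^+ q + b2 * b2 ^+ q) * \sum_(i < n) x ord0 i * y ord0 i ^+ q.
have key : forall a c : L, Tr q (a * c * P + a * c ^+ q * Q) = 0.
  move=> a c.
  have := hImB (imB_vec q b1 b2 (a *: x)) (imB_vec q b1 b2 (c *: y))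
    (imset_f _ (hC _ hx a)) (imset_f _ (hC _ hy c)).
  rewrite /dotp big_split_ord /= /imB_vec.
  under eq_bigr do rewrite !row_mxEl !mxE.
  under [X in _ + X]eq_bigr do rewrite !row_mxEr !mxE.
  move <-.
  have -> : a * c * P + a * c ^+ q * Q = \sum_(i < n)
     (a * c * (b1 ^+ 2 + b2 ^+ 2) * (x ord0 i * y ord0 i)
      + a * c ^+ q * (b1 * b1 ^+ q + b2 * b2 ^+ q) * (x ord0 i * y ord0 i ^+ q)).
    by rewrite big_split /= -!mulr_sumr /P /Q /dotp; ring.
  rewrite (Tr_sum FD q0) -big_split /=; apply: eq_bigr => i _.
  rewrite !(TrTr Fqq) -!(TrD FD); congr (Tr q _); rewrite !exprMn; ring.
have hPQ : P + Q = 0.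
  apply: nondeg => a; have := key a 1; by rewrite expr1n !mulr1 -mulrDr.
have hQ : Q = - P by apply/eqP; rewrite -addr_eq0 addrC hPQ.
have hP : (beta - beta ^+ q) * P = 0.
  apply: nondeg => a; have := key a beta.
  by rewrite hQ (_ : a * beta * P + a * beta ^+ q * - P = a * ((beta - beta ^+ q) * P)); last ring.
move: hP => /eqP; rewrite mulf_eq0 subr_eq0 eq_sym (negbTE hbeta) /= /P mulf_eq0 (negbTE Snz) /=.
by move/eqP.
Qed.
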